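(* Let $a,b\in\mathbb F_{q^2}^*$, integers $0<i_1<i_2<(q+1)/d$ and $0\le j_1,j_2<d$, and for $0\le k<d$ put $L_k(X)=1+a\epsilon^{j_1k}X^{i_1}+b\epsilon^{j_2k}X^{i_2}$. If for some $0\le k<d$ there exists $\lambda_k\in\mu_{q+1}$ with $L_k\in\mathcal L_k(i_2,0;\lambda_k)$, then $i_1=i_2/2$, $b=a^{1-q}\epsilon^{(2j_1-j_2)k}$, $\lambda_k=b^q\epsilon^{-j_2k}$, and $\lambda_k^{(q+1)/d}=\epsilon^{-2j_1k(q+1)/d+\alpha}$, where $\alpha\in\mathbb Z/d\mathbb Z$ is defined by $a^{(q^2-1)/d}=\epsilon^\alpha$.
   Context: $q$ is a prime power, $d$ is a positive divisor of $q+1$, and $\epsilon\in\mathbb F_{q^2}^*$ has multiplicative order $d$. $\mu_{q+1}$ is the subgroup of order $q+1$ of $\mathbb F_{q^2}^*$. For $a\in\mathbb F_{q^2}$, $\bar a=a^q$; for $f(X)=\sum_{i=0}^n a_iX^i\in\mathbb F_{q^2}[X]$ with $a_n\neq0$, $\tilde f(X)=\sum_{i=0}^n\bar a_iX^{n-i}$. For $0\le k<d$, $0\le t<(q+1)/d$ and $\lambda\in\mu_{q+1}$, $\mathcal L_k(t,0;\lambda)$ is the set of $L\in\mathbb F_{q^2}[X]$ with $\deg L=t$, $\tilde L=\lambda L$ and $\gcd(L,X^{(q+1)/d}-\epsilon^k)=1$. *)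

(* Defs.v *)
From mathcomp Require Import all_boot all_order all_algebra all_field.
Set Implicit Arguments. Unset Strict Implicit. Unset Printing Implicit Defensive.
Import GRing.Theory.
Local Open Scope ring_scope.

Definition fconj (F : ringType) (q : nat) (a : F) : F := a ^+ q.

Definition ptilde (F : ringType) (q : nat) (f : {poly F}) : {poly F} :=
  \poly_(i < size f) fconj q (f`_((size f).-1 - i)).

Definition in_mu (F : ringType) (q : nat) (x : F) : Prop := x ^+ q.+1 = 1.

Definition Lset (F : fieldType) (q d : nat) (eps : F) (k t : nat) (lam : F)
    (L : {poly F}) : Prop :=
  [/\ size L = t.+1,
      ptilde q L = lam *: L
    & coprimep L ('X^(q.+1 %/ d) - (eps ^+ k)%:P)].

(* Main.v *)
Require Import Defs.
From mathcomp Require Import all_boot all_order all_algebra all_field.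
From mathcomp Require Import zify ring.
Import GRing.Theory.
Local Open Scope ring_scope.

Theorem lemma4p4 (F : finFieldType) (q d : nat) (eps : F)
  (hq : exists p e : nat, [/\ prime p, (0 < e)%N & q = (p ^ e)%N])
  (hF : #|F| = (q ^ 2)%N)
  (hd : (0 < d)%N) (hdq : (d %| q.+1)%N)
  (heps : d.-primitive_root eps)
  (a b : F) (ha : a != 0) (hb : b != 0)
  (i1 i2 j1 j2 : nat)
  (hi1 : (0 < i1)%N) (hi12 : (i1 < i2)%N) (hi2 : (i2 < q.+1 %/ d)%N)
  (hj1 : (j1 < d)%N) (hj2 : (j2 < d)%N)
  (k : nat) (hk : (k < d)%N) (lam : F) (hlam : in_mu q lam)
  (hL : Lset q d eps k i2 lam
          (1 + (a * eps ^+ (j1 * k))%:P * 'X^i1 + (b * eps ^+ (j2 * k))%:P * 'X^i2)) :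
  [/\ i2 = (2 * i1)%N,
      b = a ^ (1 - (q : int)) * eps ^ ((2 * (j1 : int) - (j2 : int)) * (k : int)),
      lam = b ^+ q * eps ^ (- ((j2 * k)%N : int))
    & forall alpha : int, a ^+ ((q ^ 2).-1 %/ d) = eps ^ alpha ->
        lam ^+ (q.+1 %/ d) = eps ^ (- ((2 * j1 * k * (q.+1 %/ d))%N : int) + alpha)].
Proof.
set A := a * eps ^+ (j1 * k).
set B := b * eps ^+ (j2 * k).
set P := (X in Lset _ _ _ _ _ _ X) in hL.
have eps0 : eps != 0.
  apply/negP => /eqP e0; have := prim_expr_order heps.
  by rewrite e0 expr0n eqn0Ngt hd /= => /eqP; rewrite eq_sym oner_eq0.
have A0 : A != 0 by rewrite mulf_neq0 // expf_neq0.
have B0 : B != 0 by rewrite mulf_neq0 // expf_neq0.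
have hc : forall j, P`_j = (j == 0%N)%:R + A * (j == i1)%:R + B * (j == i2)%:R.
  by move=> j; rewrite !coefD coef1 !coefCM !coefXn.
case: hL => hs ht _.
rewrite /ptilde hs /= in ht.
have hco : forall j, (j < i2.+1)%N -> fconj q (P`_(i2 - j)) = lam * P`_j.
  move=> j hj; have := congr1 (fun p : {poly F} => p`_j) ht.
  by rewrite /= coef_poly coefZ hj.
have i20 : (i2 != 0)%N by rewrite -lt0n (leq_trans hi1 (ltnW hi12)).
have i10 : (i1 != 0)%N by rewrite -lt0n.
have i12 : (i2 != i1)%N by rewrite gtn_eqF.
have e01 : (0 == i1)%N = false by rewrite eq_sym (negPf i10).
have e02 : (0 == i2)%N = false by rewrite eq_sym (negPf i20).
have e12 : (i1 == i2)%N = false by rewrite eq_sym (negPf i12).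
have e10 : (i1 == 0)%N = false by rewrite (negPf i10).
have e20 : (i2 == 0)%N = false by rewrite (negPf i20).
have e21 : (i2 == i1)%N = false by rewrite (negPf i12).
have h0 := hco 0%N isT.
rewrite subn0 !hc /fconj ?eqxx ?e01 ?e02 ?e12 ?e10 ?e20 ?e21 ?mulr0 ?mulr1 ?addr0 ?add0r in h0.
have h2 := hco i2 (leqnn _).
rewrite subnn !hc /fconj ?eqxx ?e01 ?e02 ?e12 ?e10 ?e20 ?e21 ?mulr0 ?mulr1 ?addr0 ?add0r expr1n in h2.
have i2i1 : (i2 - i1)%N = i1.
  apply/eqP; apply/negPn/negP => hne.
  have := hco (i2 - i1)%N (leq_trans (leq_subr _ _) (leqnn _)).
  rewrite subKn ?(ltnW hi12) // !hc /fconj ?eqxx ?e01 ?e02 ?e12 ?e10 ?e20 ?e21 (negPf hne).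
  have -> : (i2 - i1 == i2)%N = false by apply/negP => /eqP; lia.
  have -> : (i2 - i1 == 0)%N = false by apply/negP => /eqP; lia.
  rewrite ?mulr0 ?mulr1 ?addr0 ?add0r => /eqP; rewrite mulr0 expf_eq0 (negPf A0) andbF.
  done.
have h1 := hco i1 ltac:(lia).
rewrite i2i1 !hc /fconj ?eqxx ?e01 ?e02 ?e12 ?e10 ?e20 ?e21 ?mulr0 ?mulr1 ?addr0 ?add0r in h1.
have q0 : (0 < q)%N.
  case: hq => p [e [pp _ ->]]; by rewrite expn_gt0 prime_gt0.
set m := (q.+1 %/ d)%N.
have hqm : q.+1 = (m * d)%N by rewrite divnK.
have heq1 : eps ^+ q.+1 = 1.
  by rewrite hqm mulnC exprM (prim_expr_order heps) expr1n.
set x := eps ^+ (j1 * k).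
set y := eps ^+ (j2 * k).
have x0 : x != 0 by rewrite expf_neq0.
have y0 : y != 0 by rewrite expf_neq0.
have hxq : x ^+ q = x^-1.
  apply: (mulIf x0); rewrite mulVf // -exprSr /x -exprM mulnC exprM heq1 expr1n //.
have hyq : y ^+ q = y^-1.
  apply: (mulIf y0); rewrite mulVf // -exprSr /y -exprM mulnC exprM heq1 expr1n //.
have hBA : B * A ^+ q = A by rewrite h1 mulrA (mulrC B) -h2 mul1r.
have Q0 : a ^+ q != 0 by rewrite expf_neq0.
have h0' : B ^+ q = lam by rewrite h0 mulr1.
split.
- lia.
- rewrite expfzDr // expr1z -exprnN.
  have -> : ((2 * (j1 : int) - (j2 : int)) * (k : int)) = ((j1 * k) * 2)%N%:Z + - ((j2 * k)%N : int) by lia.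
  rewrite expfzDr // -!exprnN -exprnP exprM -/x -/y.
  move: hBA; rewrite /B /A exprMn hxq -/x -/y => hBA; clearbody x y.
  have -> : b = b * y * (a ^+ q * x^-1) * x / (y * a ^+ q) by field; rewrite y0 Q0 x0.
  rewrite hBA; field; by rewrite y0 Q0.
- rewrite -(exprnN eps (j2 * k)) -h0' /B exprMn -/y hyq //.
- move=> alpha ha'.
  rewrite expfzDr // -ha' -exprnN.
  have -> : ((q ^ 2).-1 %/ d)%N = (q.-1 * m)%N.
    apply/eqP; rewrite -(eqn_pmul2r hd) divnK; last first.
      apply: dvdn_trans hdq _; apply/dvdnP; exists q.-1; nia.
    apply/eqP; rewrite -mulnA -hqm; nia.
  have -> : (2 * j1 * k * m)%N = (j1 * k * 2 * m)%N by lia.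
  rewrite (exprM eps (j1 * k * 2) m) (exprM eps (j1 * k) 2) -/x.
  have -> : lam = (x ^+ 2)^-1 * a ^+ q.-1.
    have hl : lam = A ^+ q / A by rewrite h1 mulfK.
    rewrite hl /A exprMn hxq -/x.
    have -> : a ^+ q = a ^+ q.-1 * a by rewrite -exprSr prednK.
    field; by rewrite ha x0.
  by rewrite exprMn exprVn -exprM (exprM a q.-1 m).
Qed.
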